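(* Let $k\in\mathbb{N}$, let $u=a_1\cdots a_n$ be a word over a finite alphabet $A$, and let $i<j$ be positions with $a_i=a_j$ and $a_\ell\neq a_i$ for all $\ell\in\{i+1,\dots,j-1\}$. Suppose the attributes satisfy $x_i+y_i\le k+1$ and $x_j\le k$. Then for every word $v$ with $u\sim_k v$, the positions $r^u_i(v)$ and $r^u_j(v)$ are defined and $r^u_i(v)<r^u_j(v)$.
   Context: $w\prec v$ ($w$ is a scattered subword of $v$) means $v=v_0b_1v_1\cdots b_mv_m$ where $w=b_1\cdots b_m$. $u\sim_k v$ iff $u,v$ have the same subwords of length at most $k$. An X-ranker is a nonempty word over $\{\mathsf X_a : a\in A\}$, a Y-ranker a nonempty word over $\{\mathsf Y_a:a\in A\}$, length = word length. For a word $w$: $\mathsf X_a(w)$ is the smallest $a$-position, $r\mathsf X_a(w)$ the smallest $a$-position greater than $r(w)$; $\mathsf Y_a(w)$ the greatest $a$-position, $r\mathsf Y_a(w)$ the greatest $a$-position smaller than $r(w)$ (possibly undefined). The attribute of position $p$ of $u$ is $(x_p,y_p)$, $x_p$ (resp. $y_p$) the minimal length of an X-ranker (resp. Y-ranker) $r$ with $r(u)=p$. Canonical X-ranker $r^u_p$: let $R^u_p$ be the set of X-rankers of length $x_p$ reaching $p$ in $u$; set $S_{x_p}=R^u_p$ and for $t=x_p-1,\dots,1$ let $q_t$ be the minimal position of $u$ reached by length-$t$ prefixes of rankers in $S_{t+1}$ and $S_t$ the set of those rankers in $S_{t+1}$ whose length-$t$ prefix reaches $q_t$; then $S_1=\{r^u_p\}$.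 *)

(* Defs.v *)
From mathcomp Require Import all_boot.
Set Implicit Arguments. Unset Strict Implicit. Unset Printing Implicit Defensive.

(* Words are [seq A] over a finite alphabet [A : finType].
   Positions are 0-indexed: position q of w holds [onth w q]
   (paper position q+1). *)
Section Rankers.
Variable A : finType.
Implicit Types (w u v : seq A) (a : A).

Definition xfrom w (s : nat) a : option nat :=
  ohead [seq q <- iota s (size w - s) | onth w q == Some a].

Definition yfrom w (b : nat) a : option nat :=
  ohead (rev [seq q <- iota 0 (minn b (size w)) | onth w q == Some a]).

(* An X-ranker X_{a1} X_{a2} ... X_{am} is represented by [:: a1; ...; am]
   (nonempty); the leftmost letter is applied first:
   X_a(w) = xfrom w 0 a and (r X_a)(w) = xfrom w (r(w)+1) a. *)
Fixpoint xrun w (s : nat) (r : seq A) : option nat :=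
  match r with
  | [::] => None
  | a :: r' => if r' is [::] then xfrom w s a
               else obind (fun p => xrun w p.+1 r') (xfrom w s a)
  end.
Definition xeval w (r : seq A) : option nat := xrun w 0 r.

(* Y-rankers: Y_a(w) = yfrom w (size w) a, (r Y_a)(w) = yfrom w (r(w)) a. *)
Fixpoint yrun w (b : nat) (r : seq A) : option nat :=
  match r with
  | [::] => None
  | a :: r' => if r' is [::] then yfrom w b a
               else obind (fun p => yrun w p r') (yfrom w b a)
  end.
Definition yeval w (r : seq A) : option nat := yrun w (size w) r.

Definition xreach u p n : bool :=
  [exists t : n.-tuple A, (0 < n) && (xeval u t == Some p)].
Definition yreach u p n : bool :=
  [exists t : n.-tuple A, (0 < n) && (yeval u t == Some p)].

(* attributes: least n with xreach u p n (resp. yreach); for a position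
   p < size u such an n <= p+1 (resp. <= size u - p) always exists, so the
   search over 0..size u finds it. *)
Definition xattr u p : nat := find (xreach u p) (iota 0 (size u).+1).
Definition yattr u p : nat := find (yreach u p) (iota 0 (size u).+1).

Section Canonical.
Variables (u : seq A) (p : nat).
Let n := xattr u p.

Definition Rset : {set n.-tuple A} :=
  [set r : n.-tuple A | (0 < n) && (xeval u r == Some p)].

(* from S_{t+1} build S_t: q_t is the minimal position reached by the
   length-t prefixes of rankers in S_{t+1} *)
Definition qmin (S : {set n.-tuple A}) (t : nat) : nat :=
  \big[minn/size u]_(r in S) odflt (size u) (xeval u (take t r)).
Definition refine_step (S : {set n.-tuple A}) (t : nat) : {set n.-tuple A} :=
  [set r in S | xeval u (take t r) == Some (qmin S t)].

Fixpoint refine_iter (S : {set n.-tuple A}) (m : nat) : {set n.-tuple A} :=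
  match m with
  | 0 => S
  | m'.+1 => refine_iter (refine_step S m'.+1) m'
  end.

Definition S1 : {set n.-tuple A} := refine_iter Rset n.-1.

(* r^u_p : the (unique) element of S_1 *)
Definition canon : option (seq A) := omap val [pick r in S1].
End Canonical.

Definition canon_eval u p v : option nat := obind (xeval v) (canon u p).

Definition simk (k : nat) u v : Prop :=
  forall w : seq A, size w <= k -> subseq w u = subseq w v.
End Rankers.

(* Main.v *)
Require Import Defs.
From mathcomp Require Import all_boot zify.
Set Implicit Arguments. Unset Strict Implicit. Unset Printing Implicit Defensive.


Section X.
Variable A : finType.
Implicit Types (l r w : seq A).

Fixpoint xr (l r : seq A) : option nat :=
  match l, r with
  | _, [::] => None
  | [::], _ => None
  | d :: l', c :: r' => if c == d then (if r' is [::] then Some 0 else omap S (xr l' r'))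
                        else omap S (xr l' r)
  end.

Definition ospec (o : option nat) q := if o is Some p then p < q else false.

Lemma xr_spec l r : r != [::] -> forall q, subseq r (take q l) = ospec (xr l r) q.
Proof.
elim: l r => [|d l IH] [|c r'] // _ q.
case: q => [|q].
  rewrite take0 /=. by case: ifP => _; [case: r' => [|? ?] //=; case: xr|case: xr].
rewrite /= .
case: (c == d).
  case: r' => [|c' r'] /=; first by rewrite sub0seq.
  rewrite IH //. by case: xr.
rewrite IH //. by case: xr.
Qed.

Lemma xr_letter l c r p : xr l (c :: r) = Some p -> onth l p = Some (last c r).
Proof.
elim: l c r p => [|d l IH] c r p //=.
case: ifP => [/eqP ->|_].
  case: r => [|c' r] /=; first by case=> <-.
  case E: xr => [p'|] //= [<-] /=. exact: IH.
case E: xr => [p'|] //= [<-] /=. exact: IH.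
Qed.

Lemma xr_nil l : xr l [::] = None.
Proof. by case: l. Qed.

Lemma xr_cons l c r : r != [::] ->
  xr l (c :: r) = obind (fun p => omap (addn p.+1) (xr (drop p.+1 l) r)) (xr l [:: c]).
Proof.
move=> nr; elim: l => [|d l IH] //=.
rewrite -/(xr l (c :: r)).
case: ifP => _.
  rewrite /= drop0; case: r nr {IH} => [|c' r'] //= _; by case: xr.
rewrite IH; case: (xr l [:: c]) => [p|] //=.
by case: xr.
Qed.

Lemma xfromE w s c : xfrom w s c = omap (addn s) (xr (drop s w) [:: c]).
Proof.
rewrite /xfrom; move E: (size w - s) => n.
elim: n s E => [|n IH] s E /=.
  rewrite drop_oversize; first by [].
  by rewrite -subn_eq0 E.
have ss : s < size w by rewrite -subn_gt0 E.
rewrite (drop_nth c ss) /=.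
have -> : onth w s = Some (nth c w s) by rewrite onthE (nth_map c) // .
rewrite (inj_eq Some_inj) eq_sym.
case: ifP => _ /=; first by rewrite addn0.
rewrite IH; last by rewrite subnS E.
by case: xr => //= p; rewrite addnS addSn.
Qed.

Lemma xrunE w s r : xrun w s r = omap (addn s) (xr (drop s w) r).
Proof.
elim: r s => [|c r IH] s; first by rewrite xr_nil.
case: r IH => [|c' r] IH; first by rewrite /= xfromE.
have -> : xrun w s [:: c, c' & r] = obind (fun p => xrun w p.+1 (c'::r)) (xfrom w s c) by [].
rewrite xfromE (@xr_cons (drop s w) c (c' :: r)) //.
case: (xr (drop s w) [:: c]) => [p|] //.
rewrite [obind _ _]/= -/(xrun w (s + p).+1 (c' :: r)).
rewrite IH /= drop_drop addnC.
case: xr => //= q. by rewrite !addSn addnS addnA (addnC p).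
Qed.

Lemma xevalE w r : xeval w r = xr w r.
Proof. by rewrite /xeval xrunE drop0; case: xr. Qed.

Lemma yfromE w b c : b <= size w ->
  yfrom w b c = omap (fun p => b - p.+1) (xr (rev (take b w)) [:: c]).
Proof.
rewrite /yfrom => bw; rewrite (minn_idPl bw).
elim: b bw => [|b IH] bw; first by rewrite take0.
have bs : b < size w by [].
rewrite -addn1 iotaD add0n /= filter_cat /= rev_cat.
rewrite addn1 (take_nth c bs) rev_rcons.
have -> : onth w b = Some (nth c w b) by rewrite onthE (nth_map c).
rewrite (inj_eq Some_inj) /= (eq_sym c).
case: ifP => _ /=; first by rewrite subSS subn0.
rewrite IH; last exact: ltnW.
by case: xr => //= p; rewrite subSS.
Qed.

Lemma yrunE w b r : b <= size w ->
  yrun w b r = omap (fun p => b - p.+1) (xr (rev (take b w)) r).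
Proof.
elim: r b => [|c r IH] b bw; first by rewrite xr_nil.
case: r IH => [|c' r] IH; first by rewrite /= yfromE.
have -> : yrun w b [:: c, c' & r] = obind (fun p => yrun w p (c'::r)) (yfrom w b c) by [].
rewrite yfromE // (@xr_cons _ c (c' :: r)) //.
case E: (xr _ [:: c]) => [p|] //=.
have pb : p < b.
  have := onthTE (rev (take b w)) p; rewrite (xr_letter E) size_rev size_takel //.
rewrite -/(yrun w (b - p.+1) (c' :: r)).
rewrite IH; last by apply: leq_trans bw; apply: leq_subr.
rewrite drop_rev size_takel // take_takel ?leq_subr //.
case: xr => //= q. congr Some. rewrite -subnDA addnS addSn //.
Qed.

Lemma xr_ne l r p : xr l r = Some p -> r != [::].
Proof. by case: r => //; rewrite xr_nil. Qed.

Lemma xr_some_spec l r p : xr l r = Some p -> forall q, subseq r (take q l) = (p < q).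
Proof. by move=> E q; rewrite xr_spec ?(xr_ne E) // E. Qed.

Lemma xr_uniq l r p : r != [::] -> (forall q, subseq r (take q l) = (p < q)) -> xr l r = Some p.
Proof.
move=> nr H; case E: (xr l r) => [p'|].
  have H' := xr_some_spec E.
  congr Some; apply/eqP; rewrite eqn_leq.
  by rewrite -ltnS -H' H leqnn -ltnS -H H' leqnn.
by have := H p.+1; rewrite xr_spec // E ltnSn.
Qed.

Lemma xr_letter' l r p x : xr l r = Some p -> onth l p = Some (last x r).
Proof. by case: r => [|c r]; [rewrite xr_nil | move/xr_letter]. Qed.

Lemma xr_lt l r p : xr l r = Some p -> p < size l.
Proof.
case: r => [|c r] E; first by rewrite xr_nil in E.
by have := onthTE l p; rewrite (xr_letter E).
Qed.

Lemma xr_defined l r : r != [::] -> subseq r l -> exists p, xr l r = Some p.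
Proof.
move=> nr sr; have := xr_spec l nr (size l); rewrite take_size sr.
by case: xr => // p _; exists p.
Qed.

Lemma xr_take l p : p < size l -> xr l (take p.+1 l) = Some p.
Proof.
move=> pl; apply: xr_uniq.
  by case: l pl => // d l _.
move=> q; apply/idP/idP.
  move/size_subseq; rewrite !size_take_min (minn_idPl pl) leq_min => /andP[]//.
by move=> pq; rewrite -(take_takel _ pq) take_subseq.
Qed.

Lemma take_mono l q q' : q <= q' -> subseq (take q l) (take q' l).
Proof. by move=> h; rewrite -(take_takel _ h) take_subseq. Qed.

Lemma drop_mono l q q' : q <= q' -> subseq (drop q' l) (drop q l).
Proof. by move=> h; rewrite -(subnK h) -drop_drop drop_subseq. Qed.

Lemma subseq_rcons2 s l c : subseq (rcons s c) (rcons l c) -> subseq s l.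
Proof. by rewrite -subseq_rev !rev_rcons /= eqxx subseq_rev. Qed.

Lemma subseq_catP r1 r2 l : subseq (r1 ++ r2) l ->
  exists t, subseq r1 (take t l) && subseq r2 (drop t l).
Proof.
elim: l r1 => [|d l IH] r1.
  by case: r1 => // /eqP; case: r2 => // _; exists 0.
case: r1 => [|c r1] /=.
  by move=> h; exists 0; rewrite sub0seq drop0.
case: ifP => [/eqP ->|ne] h.
  have [t /andP[h1 h2]] := IH r1 h; exists t.+1 => /=.
  by rewrite eqxx h1.
have [t /andP[h1 h2]] := IH (c :: r1) h; exists t.+1 => /=.
by rewrite h2 andbT ne.
Qed.

Lemma xr_strict l s c p1 p2 : xr l s = Some p1 -> xr l (rcons s c) = Some p2 -> p1 < p2.
Proof.
move=> E1 E2.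
have sl := xr_some_spec E2 p2.+1; rewrite ltnSn in sl.
have lt2 := xr_lt E2.
have := xr_letter' c E2; rewrite last_rcons onthE (nth_map c) // => -[nc].
rewrite (take_nth c lt2) nc in sl.
by rewrite -(xr_some_spec E1); apply: subseq_rcons2 sl.
Qed.
End X.


Lemma find_iota_spec (P : pred nat) m n : P n -> n <= m ->
  let f := find P (iota 0 m.+1) in [/\ P f, f <= n & forall k, k < f -> ~~ P k].
Proof.
move=> Pn nm f.
have hs : has P (iota 0 m.+1) by apply/hasP; exists n => //; rewrite mem_iota.
have fs : f < m.+1 by rewrite -[m.+1](size_iota 0) -has_find.
have Pf : P f by have := nth_find 0 hs; rewrite nth_iota.
have mn : forall k, k < f -> ~~ P k.
  move=> k kf; have := before_find 0 kf; rewrite nth_iota ?add0n => [->//|].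
  exact: ltn_trans kf fs.
split => //; rewrite leqNgt; apply/negP => /mn; by rewrite Pn.
Qed.

Section Mins.
Variables (T : finType) (S : {set T}) (F : T -> nat) (x0 : nat).
Hypothesis Fx0 : forall r, F r <= x0.
Let m := \big[minn/x0]_(r in S) F r.

Lemma bmin_le r : r \in S -> m <= F r.
Proof.
rewrite /m => rS; have : r \in index_enum T := mem_index_enum r.
elim: (index_enum T) => // y l IH; rewrite inE big_cons => /orP [/eqP <-|rl].
  by rewrite rS geq_minl.
by case: ifP => _; [rewrite geq_min IH ?orbT | exact: IH].
Qed.

Lemma bmin_cases : m = x0 \/ exists2 r, r \in S & m = F r.
Proof.
rewrite /m; apply: (big_ind (fun k => k = x0 \/ exists2 r, r \in S & k = F r)).
- by left.
- by move=> a b Ha Hb /=; case: (leqP a b).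
- by move=> r rS; right; exists r.
Qed.

Lemma bmin_ub : m <= x0.
Proof. by case: bmin_cases => [->|[r _ ->]]. Qed.
End Mins.

Lemma bmin_eq (T1 T2 : finType) (S1 : {set T1}) (S2 : {set T2}) F1 F2 x0 :
  (forall r, F1 r <= x0) -> (forall r, F2 r <= x0) ->
  (forall r1, r1 \in S1 -> exists2 r2, r2 \in S2 & F2 r2 = F1 r1) ->
  (forall r2, r2 \in S2 -> exists2 r1, r1 \in S1 & F1 r1 = F2 r2) ->
  \big[minn/x0]_(r in S1) F1 r = \big[minn/x0]_(r in S2) F2 r.
Proof.
move=> h1 h2 e12 e21.
have le12 : \big[minn/x0]_(r in S2) F2 r <= \big[minn/x0]_(r in S1) F1 r.
  case: (bmin_cases S1 F1 x0) => [->|[r rS ->]]; first exact: bmin_ub.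
  by have [r2 r2S <-] := e12 r rS; apply: bmin_le.
have le21 : \big[minn/x0]_(r in S1) F1 r <= \big[minn/x0]_(r in S2) F2 r.
  case: (bmin_cases S2 F2 x0) => [->|[r rS ->]]; first exact: bmin_ub.
  by have [r1 r1S <-] := e21 r rS; apply: bmin_le.
by apply/eqP; rewrite eqn_leq le12 le21.
Qed.


Section Canon.
Variables (A : finType) (u : seq A).

Lemma Fle (o : option nat) (r : seq A) : xeval u r = o -> odflt (size u) o <= size u.
Proof. by rewrite xevalE; case: o => //= q /xr_lt /ltnW. Qed.

Lemma Fle' (r : seq A) : odflt (size u) (xeval u r) <= size u.
Proof. exact: (@Fle _ r). Qed.

Lemma pref_def r p t : xr u r = Some p -> 0 < t -> exists q, xr u (take t r) = Some q.
Proof.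
move=> E t0; apply: xr_defined.
  by case: r E t0 => [|c r]; [rewrite xr_nil | case: t].
apply: subseq_trans (take_subseq _ _) _.
have := xr_some_spec E (size u); rewrite take_size => ->.
exact: xr_lt E.
Qed.

Lemma last_take (x : A) s t : 0 < t <= size s -> last x (take t s) = nth x s t.-1.
Proof.
case: t => // t /= ts; by rewrite (take_nth x ts) last_rcons.
Qed.

Section P.
Variable p : nat.
Local Notation n := (xattr u p).
Local Notation TT := (n.-tuple A).

Lemma refine_sub (S : {set TT}) t : refine_step S t \subset S.
Proof. by apply/subsetP => T; rewrite inE => /andP[]. Qed.

Lemma refine_iter_sub (S : {set TT}) m : refine_iter S m \subset S.
Proof.
elim: m S => [|m IH] S /=; first exact: subxx.
exact: subset_trans (IH _) (refine_sub _ _).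
Qed.

Lemma RsetP (T : TT) : T \in Rset u p -> xr u T = Some p.
Proof. by rewrite inE => /andP[_ /eqP]; rewrite xevalE. Qed.

Definition agree (S : {set TT}) m := forall T1 T2, T1 \in S -> T2 \in S ->
  forall t, m < t <= n -> xeval u (take t T1) = xeval u (take t T2).

Lemma agree_iter (S : {set TT}) m : agree S m -> agree (refine_iter S m) 0.
Proof.
elim: m S => [|m IH] S // H /=; apply: IH.
move=> T1 T2; rewrite !inE => /andP[T1S /eqP e1] /andP[T2S /eqP e2] t /andP[mt tn].
case: (ltngtP t m.+1) => h.
- by rewrite ltnS leqNgt mt in h.
- by apply: H => //; rewrite h tn.
- by rewrite h e1 e2.
Qed.

Lemma agree_Rset : agree (Rset u p) n.-1.
Proof.
move=> T1 T2 /RsetP e1 /RsetP e2 t /andP[nt tn].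
have -> : t = n by apply/eqP; rewrite eqn_leq tn; case: (n) nt => //.
by rewrite !take_oversize ?size_tuple // !xevalE e1 e2.
Qed.

Lemma S1_uniq T1 T2 : T1 \in S1 u p -> T2 \in S1 u p -> T1 = T2.
Proof.
have ag := agree_iter agree_Rset.
move=> h1 h2.
have /RsetP e1 := subsetP (refine_iter_sub _ _) _ h1.
have /RsetP e2 := subsetP (refine_iter_sub _ _) _ h2.
have [c0 _] : exists c : A, True.
  by move: (xr_lt e1); case: (u) => // c _ _; exists c.
apply: val_inj; apply: (@eq_from_nth _ c0); first by rewrite !size_tuple.
move=> k; rewrite size_tuple => kn.
have := ag _ _ h1 h2 k.+1; rewrite kn /= => /(_ isT); rewrite !xevalE.
have [q eq1] := pref_def e1 (ltn0Sn k).
rewrite eq1 => eq2.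
have := xr_letter' c0 eq1; have := xr_letter' c0 (esym eq2).
rewrite !last_take ?size_tuple // => -> [] //.
Qed.

Lemma step_nonempty (S : {set TT}) t : S \subset Rset u p -> S != set0 -> 0 < t ->
  refine_step S t != set0.
Proof.
move=> SR /set0Pn [T0 T0S] t0.
set F := fun r : TT => odflt (size u) (xeval u (take t r)).
have Fl : forall r, F r <= size u by move=> r; exact: Fle'.
have Fd : forall r, r \in S -> exists q, xeval u (take t r) = Some q.
  move=> r /(subsetP SR) /RsetP e; rewrite xevalE; exact: pref_def e t0.
case: (bmin_cases S F (size u)) => [E|[r rS E]].
  have := bmin_le F (size u) T0S; rewrite E /F.
  have [q eq] := Fd _ T0S; rewrite eq /=.
  by move: eq; rewrite xevalE => /xr_lt; rewrite ltnNge => /negbTE ->.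
apply/set0Pn; exists r; rewrite inE rS /=.
rewrite /qmin -/F E /F; have [q eq] := Fd _ rS; by rewrite eq.
Qed.

Lemma iter_nonempty (S : {set TT}) m : S \subset Rset u p -> S != set0 ->
  refine_iter S m != set0.
Proof.
elim: m S => [|m IH] S SR SN //=.
apply: IH; first exact: subset_trans (refine_sub _ _) SR.
exact: step_nonempty.
Qed.

Lemma canon_spec : Rset u p != set0 ->
  exists2 T : TT, T \in S1 u p & canon u p = Some (val T).
Proof.
move=> RN; rewrite /canon; case: pickP => [T TS|H]; first by exists T.
have := iter_nonempty n.-1 (subxx _) RN; rewrite /S1.
by case/set0Pn => T; rewrite H.
Qed.
End P.
End Canon.


Section Rel.
Variables (A : finType) (u : seq A) (i j : nat) (a : A).

Lemma take_rcons_le (s : seq A) x t : t <= size s -> take t (rcons s x) = take t s.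
Proof.
move=> ts; rewrite -cats1 take_cat; case: ltnP => // h.
have -> : t = size s by apply/eqP; rewrite eqn_leq ts h.
by rewrite subnn take0 cats0 take_size.
Qed.

Lemma rcons_subseq (s l : seq A) x : subseq s l -> subseq (rcons s x) (rcons l x).
Proof. by move=> h; rewrite -!cats1 cat_subseq ?subseq_refl. Qed.

Hypotheses (ij : i < j) (ju : j < size u) (ui : onth u i = Some a) (uj : onth u j = Some a).

Lemma nth_ui : nth a u i = a.
Proof. exact: onth_nth ui. Qed.
Lemma iu : i < size u.
Proof. exact: ltn_trans ij ju. Qed.

Lemma take_i1 : take i.+1 u = rcons (take i u) a.
Proof. by rewrite (take_nth a iu) nth_ui. Qed.

Lemma G (s : seq A) c : xr u (rcons s c) = Some j ->
  c = a /\ exists m, xr u s = Some m /\ i <= m < j.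
Proof.
move=> E.
have ca : c = a by have := xr_letter' c E; rewrite last_rcons uj => -[].
split => //; subst c.
have notsi : ~~ subseq s (take i u).
  apply/negP => h; have := xr_some_spec E i.+1.
  by rewrite take_i1 rcons_subseq // ltnS leqNgt ij.
have sne : s != [::] by case: (s) notsi => //; rewrite sub0seq.
have [m Em] : exists m, xr u s = Some m.
  apply: xr_defined sne _; apply: subseq_trans (subseq_rcons s a) _.
  have := xr_some_spec E (size u); rewrite take_size => ->; exact: xr_lt E.
exists m; split => //; rewrite (xr_strict Em E) andbT leqNgt; apply/negP => mi.
by rewrite -(xr_some_spec Em) in mi; rewrite mi in notsi.
Qed.

Hypothesis noa : forall l, i < l < j -> onth u l != onth u i.

Lemma H r : xr u r = Some i -> xr u (rcons r a) = Some j.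
Proof.
move=> E; apply: xr_uniq; first by case: (r).
move=> q; apply/idP/idP => [h|jq].
  rewrite ltnNge; apply/negP => qj.
  move: h; rewrite -cats1 => /subseq_catP [t /andP[h1 h2]].
  have it : i < t.
    rewrite -(xr_some_spec E); apply: subseq_trans h1 _.
    by rewrite -take_min take_mono // geq_minl.
  move: h2; rewrite sub1seq => /(nthP a) [pi pis pia].
  rewrite size_drop size_take_min in pis.
  have hq : t + pi < minn q (size u) by rewrite -ltn_subRL.
  rewrite leq_min in hq; case/andP: hq => hq hu.
  rewrite nth_drop nth_take // in pia.
  have := noa (l := t + pi); rewrite ui.
  have -> : onth u (t + pi) = Some a by rewrite onthE (nth_map a) // pia.
  rewrite eqxx /= => H0; suff : i < t + pi < j by move/H0.
  by rewrite (leq_trans it (leq_addr _ _)) (leq_trans hq qj).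
have ri : subseq r (take j u).
  by rewrite (subseq_trans _ (take_mono _ ij)) // (xr_some_spec E).
have nj : nth a u j = a by exact: onth_nth uj.
have := rcons_subseq a ri; rewrite -{2}nj -take_nth // => h.
exact: subseq_trans h (take_mono _ jq).
Qed.

Definition Rel (Sj : {set (xattr u j).-tuple A}) (Si : {set (xattr u i).-tuple A}) :=
  (forall T, T \in Sj -> exists2 T', T' \in Si & val T = rcons (val T') a) /\
  (forall T', T' \in Si -> exists2 T, T \in Sj & val T = rcons (val T') a).

Lemma Rel_step Sj Si t : Rel Sj Si -> t <= xattr u i -> Rel (refine_step Sj t) (refine_step Si t).
Proof.
move=> [R1 R2] ti.
have Fe : forall (T : (xattr u j).-tuple A) (T' : (xattr u i).-tuple A),
    val T = rcons (val T') a -> take t T = take t T'.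
  by move=> T T' ->; rewrite take_rcons_le // size_tuple.
have qe : qmin Sj t = qmin Si t.
  apply: bmin_eq => [r|r|r rS|r rS]; try exact: Fle'.
    by have [T' T'S e] := R1 r rS; exists T' => //; rewrite (Fe _ _ e).
  by have [T TS e] := R2 r rS; exists T => //; rewrite (Fe _ _ e).
split.
  move=> T; rewrite inE => /andP[TS /eqP ev].
  have [T' T'S e] := R1 T TS; exists T' => //.
  by rewrite inE T'S -qe -(Fe _ _ e) ev eqxx.
move=> T'; rewrite inE => /andP[T'S /eqP ev].
have [T TS e] := R2 T' T'S; exists T => //.
by rewrite inE TS qe (Fe _ _ e) ev eqxx.
Qed.

Lemma Rel_iter Sj Si m : Rel Sj Si -> m <= xattr u i -> Rel (refine_iter Sj m) (refine_iter Si m).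
Proof.
elim: m Sj Si => [|m IH] Sj Si // R mi /=.
apply: IH; last exact: ltnW.
exact: Rel_step.
Qed.
End Rel.


Section Attr.
Variables (A : finType) (u : seq A).

Lemma xreach_wit p : p < size u -> xreach u p p.+1.
Proof.
move=> pu; have sz : size (take p.+1 u) == p.+1 by rewrite size_takel.
by apply/existsP; exists (Tuple sz); rewrite /= xevalE xr_take.
Qed.

Lemma xattr_spec p : p < size u ->
  [/\ xreach u p (xattr u p), xattr u p <= p.+1 & forall k, k < xattr u p -> ~~ xreach u p k].
Proof. by move=> pu; exact: find_iota_spec (xreach_wit pu) pu. Qed.

Lemma yreach_wit p : p < size u -> yreach u p (size u - p).
Proof.
move=> pu; have sz : size (rev (drop p u)) == size u - p by rewrite size_rev size_drop.
apply/existsP; exists (Tuple sz); rewrite /= subn_gt0 pu /=.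
rewrite /yeval yrunE // take_size.
have -> : rev (drop p u) = take (size u - p.+1).+1 (rev u).
  by rewrite subnSK // take_rev subKn // ltnW.
rewrite xr_take ?size_rev ?ltn_subrL ?(leq_ltn_trans (leq0n p) pu) //=.
apply/eqP; congr Some; lia.
Qed.

Lemma yattr_spec p : p < size u -> yreach u p (yattr u p).
Proof.
move=> pu; have [] := find_iota_spec (yreach_wit pu) (leq_subr p (size u)) => //.
Qed.

Lemma ychar t p : yeval u t = Some p ->
  subseq (rev t) (drop p u) && ~~ subseq (rev t) (drop p.+1 u).
Proof.
rewrite /yeval yrunE // take_size.
case E: xr => [p'|] //= [ep].
have sp := xr_some_spec E.
have pl := xr_lt E; rewrite size_rev in pl.
have key : forall d, d <= size u -> subseq (rev t) (drop d u) = (p' < size u - d).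
  move=> d du; rewrite -subseq_rev revK -sp take_rev subKn //.
rewrite !key; try lia.

Qed.
End Attr.



Section Base.
Variables (A : finType) (u : seq A) (i j : nat) (a : A).
Hypotheses (ij : i < j) (ju : j < size u) (ui : onth u i = Some a) (uj : onth u j = Some a).
Hypothesis noa : forall l, i < l < j -> onth u l != onth u i.
Hypothesis N0 : 0 < xattr u i.
Hypothesis RiN : Rset u i != set0.
Hypothesis eJ : xattr u j = (xattr u i).+1.

Lemma decomp (s : seq A) N x : size s = N.+1 -> s = rcons (take N s) (nth x s N).
Proof. by move=> sz; rewrite -take_nth ?sz // take_oversize ?sz. Qed.

Lemma qmin_base : qmin (Rset u j) (xattr u i) = i.
Proof.
set N := xattr u i.
set F := fun r : (xattr u j).-tuple A => odflt (size u) (xeval u (take N r)).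
have [Ti TiR] := set0Pn _ RiN.
have Ei := RsetP TiR.
have sz : size (rcons (val Ti) a) == xattr u j by rewrite size_rcons size_tuple eJ.
set T0 := Tuple sz.
have T0R : T0 \in Rset u j.
  rewrite inE; apply/andP; split; first by rewrite eJ.
  by rewrite /= xevalE (H ij ju ui uj noa Ei) eqxx.
have FT0 : F T0 = i by rewrite /F /= take_rcons_le ?size_tuple // take_oversize ?size_tuple // xevalE Ei.
have Fge : forall T, T \in Rset u j -> i <= F T.
  move=> T /RsetP E.
  have c0 := a.
  rewrite (decomp c0 (_ : size T = N.+1)) in E; last by rewrite size_tuple eJ.
  have [_ [m [Em /andP[im _]]]] := G ij ju ui uj E.
  by rewrite /F xevalE Em.
have le := bmin_le F (size u) T0R.
rewrite FT0 in le.
case: (bmin_cases (Rset u j) F (size u)) => [E|[T TR E]].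
  by move: le; rewrite /qmin -/F E leqNgt (ltn_trans ij ju).
apply/eqP; rewrite eqn_leq; rewrite /qmin -/F in le *; rewrite le E Fge //.
Qed.

Lemma Rel_base : Rel a (refine_step (Rset u j) (xattr u i)) (Rset u i).
Proof.
set N := xattr u i.
split.
  move=> T; rewrite inE qmin_base => /andP[/RsetP E /eqP eN].
  have sT : size T = N.+1 by rewrite size_tuple eJ.
  have sz : size (take N T) == N by rewrite size_takel // sT.
  exists (Tuple sz).
    by rewrite inE N0 /= eN.
  rewrite (decomp a sT) in E.
  have [ca _] := G ij ju ui uj E.
  by rewrite /= {1}(decomp a sT) ca.
move=> T' T'R; have Ei := RsetP T'R.
have sz : size (rcons (val T') a) == xattr u j by rewrite size_rcons size_tuple eJ.
exists (Tuple sz) => //.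
rewrite inE qmin_base; apply/andP; split.
  rewrite inE; apply/andP; split; first by rewrite eJ.
  by rewrite /= xevalE (H ij ju ui uj noa Ei) eqxx.
by rewrite /= take_rcons_le ?size_tuple // take_oversize ?size_tuple // xevalE Ei.
Qed.
End Base.


Lemma Rset_nonempty (A : finType) (u : seq A) p : p < size u ->
  0 < xattr u p /\ Rset u p != set0.
Proof.
move=> pu; have [/existsP [T /andP [n0 ET]] _ _] := xattr_spec pu.
split => //; apply/set0Pn; exists T; by rewrite inE n0.
Qed.

Lemma canon_get (A : finType) (u : seq A) p : p < size u ->
  exists2 T : (xattr u p).-tuple A, T \in S1 u p & canon u p = Some (val T).
Proof. by move=> pu; apply: canon_spec; case: (Rset_nonempty pu). Qed.

Lemma in_S1 (A : finType) (u : seq A) p (T : (xattr u p).-tuple A) :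
  T \in S1 u p -> xr u T = Some p.
Proof. by move=> h; apply: RsetP; exact: (subsetP (refine_iter_sub _ _) _ h). Qed.

Unset Implicit Arguments.
Theorem lemma7 (A : finType) (k : nat) (u : seq A) (i j : nat) :
  i < j -> j < size u ->
  onth u i = onth u j ->
  (forall l, i < l < j -> onth u l != onth u i) ->
  xattr u i + yattr u i <= k.+1 ->
  xattr u j <= k ->
  forall v : seq A, simk k u v ->
    exists pi pj, canon_eval u i v = Some pi /\ canon_eval u j v = Some pj /\ pi < pj.
Proof.
move=> ij ju uij noa hxy hxj v sim.
have iu : i < size u := ltn_trans ij ju.
case Ea : (onth u i) => [a|]; last by move: (onthTE u i); rewrite Ea iu.
have ui := Ea; have uj : onth u j = Some a by rewrite -uij.
have [N0 RiN] := Rset_nonempty iu.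
have [J0 RjN] := Rset_nonempty ju.
have [Ti TiS ci] := canon_get iu.
have [Tj TjS cj] := canon_get ju.
have Ei := in_S1 TiS. have Ej := in_S1 TjS.
rewrite /canon_eval ci cj /= !xevalE.
have subu : forall r p, xr u r = Some p -> subseq r u.
  move=> r p E; have := xr_some_spec E (size u); rewrite take_size => ->; exact: xr_lt E.
have tr : forall w, w != [::] -> size w <= k -> subseq w u -> exists p, xr v w = Some p.
  by move=> w wn wk wu; rewrite (sim w wk) in wu; exact: xr_defined.
have nei : tval Ti != [::] := xr_ne Ei.
have sTi : size Ti = xattr u i := size_tuple Ti.
have sTj : size Tj = xattr u j := size_tuple Tj.
have lastTi : last a Ti = a by have := xr_letter' a Ei; rewrite ui => -[].
case: (leqP (xattr u j) (xattr u i)) => hJN.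
- have sTj' : size Tj = (xattr u j).-1.+1 by rewrite sTj prednK.
  have Ej' := Ej; rewrite (decomp a sTj') in Ej'.
  have [ca [m [Em /andP[im mj]]]] := G ij ju ui uj Ej'.
  set s := take (xattr u j).-1 Tj in Em Ej' ca.
  have eTj : tval Tj = rcons s a by rewrite {1}(decomp a sTj') ca.
  have ssz : size s = (xattr u j).-1 by rewrite /s size_takel // sTj leq_pred.
  have [t /andP[Y0 /eqP Et]] := existsP (yattr_spec iu).
  have /andP[z1 z2] := ychar Et.
  have nia : nth a u i = a by exact: onth_nth ui.
  have di : drop i u = a :: drop i.+1 u by rewrite (drop_nth a iu) nia.
  have szz : size (rev t) = yattr u i by rewrite size_rev size_tuple.
  case Ez: (rev t) z1 z2 szz => [|c0 z] z1 z2 szz; first by rewrite sub0seq in z2.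
  have [c0a zi] : c0 = a /\ subseq z (drop i.+1 u).
    move: z1; rewrite di /=; case: ifP => [/eqP -> //|_ h].
    by rewrite h in z2.
  subst c0.
  have h0 : subseq (tval Ti ++ z) (take i.+1 u ++ drop i.+1 u).
    by rewrite cat_subseq // (xr_some_spec Ei).
  rewrite cat_take_drop in h0.
  rewrite sim in h0; last by rewrite size_cat sTi; simpl in szz; move: hxy szz; clear; lia.
  have [q /andP[h1 h2]] := subseq_catP h0.
  have [rho Er] := xr_defined nei (subseq_trans h1 (take_subseq _ _)).
  have rq : rho < q by rewrite -(xr_some_spec Er).
  have sne : s != [::] := xr_ne Em.
  have sk : size s <= k by rewrite ssz; move: hxj; clear; lia.
  have [sg Es] := tr s sne sk (subu _ _ Em).
  have jk : size Tj <= k by rewrite sTj.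
  have [pj Ej2] := tr (tval Tj) (xr_ne Ej) jk (subu _ _ Ej).
  exists rho, pj; do 2 split => //.
  rewrite eTj in Ej2; have sp := xr_strict Es Ej2.
  apply: leq_ltn_trans sp; rewrite leqNgt; apply/negP => sr.
  have rv : rho < size v := xr_lt Er.
  have nva : nth a v rho = a.
    by have := xr_letter' a Er; rewrite lastTi; exact: onth_nth.
  have dv : drop rho v = a :: drop rho.+1 v by rewrite (drop_nth a rv) nva.
  have h3 : subseq (a :: z) (drop rho v).
    by rewrite dv /= eqxx (subseq_trans h2 (drop_mono _ rq)).
  have h4 : subseq s (take rho v) by rewrite (xr_some_spec Es).
  have h5 : subseq (s ++ a :: z) v by rewrite -(cat_take_drop rho v) cat_subseq.
  rewrite -sim in h5; last by rewrite size_cat ssz /=; simpl in szz; move: hxy szz hJN J0; clear; lia.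
  have [q' /andP[g1 g2]] := subseq_catP h5.
  have mq : m < q' by rewrite -(xr_some_spec Em).
  have : subseq (a :: z) (drop i.+1 u).
    apply: subseq_trans g2 (drop_mono _ _); move: im mq; clear; lia.
  by rewrite (negbTE z2).
- have xrj : xreach u j (xattr u i).+1.
    have sz : size (rcons (tval Ti) a) == (xattr u i).+1 by rewrite size_rcons sTi.
    apply/existsP; exists (Tuple sz); rewrite /= xevalE (H ij ju ui uj noa Ei) eqxx.
    by [].
  have eJ : xattr u j = (xattr u i).+1.
    have [_ _ mn] := xattr_spec ju.
    apply/eqP; rewrite eqn_leq hJN andbT leqNgt; apply/negP => /mn.
    by rewrite xrj.
  have R := Rel_iter (m := (xattr u i).-1) (Rel_base ij ju ui uj noa N0 RiN eJ) (leq_pred _).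
  have e1 : (xattr u j).-1 = (xattr u i).-1.+1 by rewrite eJ /= prednK.
  have eS : S1 u j = refine_iter (refine_step (Rset u j) (xattr u i)) (xattr u i).-1.
    by rewrite /S1 e1 /= prednK.
  rewrite eS in TjS.
  have [T' T'S eT] := R.1 Tj TjS.
  rewrite (S1_uniq T'S TiS) in eT.
  have ik : size Ti <= k by rewrite sTi; move: hJN hxj; clear; lia.
  have [pi Epi] := tr (tval Ti) nei ik (subu _ _ Ei).
  have jk : size Tj <= k by rewrite sTj.
  have [pj Epj] := tr (tval Tj) (xr_ne Ej) jk (subu _ _ Ej).
  exists pi, pj; do 2 split => //.
  rewrite eT in Epj; exact: xr_strict Epi Epj.
Qed.
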